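(* Let $n\ge 2$. The graph $D_n$ is complete if and only if every prime $p\le \frac n2$ satisfies both $p\mid n$ and $p^{\acute v_p(n)}>\frac n2$.
   Context: $D_n$ is the graph with vertex set $\{1,\dots,n\}$ in which distinct $a,b$ are adjacent iff $\gcd(a,b)\mid n$ (the maximal Diophantine graph of order $n$). For a prime $p$, $\acute v_p(n):=v_p(n)+1$, where $v_p(n)$ is the exponent of $p$ in $n$. *)

(* Defs.v *)
From mathcomp Require Import all_boot.
Set Implicit Arguments. Unset Strict Implicit. Unset Printing Implicit Defensive.

(* Maximal Diophantine graph D_n: vertex set {1,...,n}; distinct a, b adjacent
   iff gcd(a,b) divides n. *)
Definition Dn_adj (n a b : nat) : bool := (a != b) && (gcdn a b %| n).

Definition Dn_complete (n : nat) : Prop :=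
  forall a b : nat, 1 <= a <= n -> 1 <= b <= n -> a != b -> Dn_adj n a b.

Definition vacute (p n : nat) : nat := (logn p n).+1.

(* Main.v *)
Require Import Defs.
From mathcomp Require Import all_boot.
From mathcomp Require Import zify.

Lemma K1 n : Dn_complete n -> forall k, 0 < k -> 2 * k <= n -> k %| n.
Proof.
move=> H k k0 kn.
have h1 : 1 <= k <= n by apply/andP; split; lia.
have h2 : 1 <= 2 * k <= n by apply/andP; split; lia.
have h3 : k != 2 * k by rewrite neq_ltn; apply/orP; left; lia.
have := H _ _ h1 h2 h3; rewrite /Dn_adj gcdnMl => /andP [].
done.
Qed.

Lemma K2 n : (forall k, 0 < k -> 2 * k <= n -> k %| n) -> Dn_complete n.
Proof.
move=> H.
suff W : forall a b, 1 <= a <= n -> 1 <= b <= n -> a < b -> gcdn a b %| n.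
  move=> a b Ha Hb ab; rewrite /Dn_adj ab /=.
  move: ab; rewrite neq_ltn => /orP [ab|ba]; first exact: W.
  by rewrite gcdnC; apply: W.
move=> a b /andP [a1 an] /andP [b1 bn] ab.
set d := gcdn a b.
have d0 : 0 < d by rewrite gcdn_gt0; lia.
have da : d %| a by apply: dvdn_gcdl.
have db : d %| b by apply: dvdn_gcdr.
apply: H => //.
have ea := divnK da; have eb := divnK db.
set r := a %/ d in ea; set q := b %/ d in eb.
have r1 : 1 <= r by case: r ea => [|r0] //= ea; lia.
have qr : r < q by case: (ltnP r q) => // h; have := leq_mul h (leqnn d); lia.
have : 2 * d <= q * d by apply: leq_mul; lia.
lia.
Qed.

Theorem mainTheorem10 (n : nat) (hn : 2 <= n) :
  Dn_complete n <->
  (forall p : nat, prime p -> 2 * p <= n ->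
     p %| n /\ n < 2 * p ^ vacute p n).
Proof.
have n0 : 0 < n by lia.
split.
  move=> /K1 H p pp pn; split.
    by apply: H => //; apply: prime_gt0.
  rewrite /vacute; case: (ltnP n (2 * p ^ (logn p n).+1)) => // h.
  have := H _ _ h; rewrite pfactor_dvdn // ltnn; apply.
  by rewrite expn_gt0 prime_gt0.
move=> H; apply: K2 => k k0 kn.
apply/(dvdn_partP _ k0) => p; rewrite mem_primes => /and3P [pp _ pk].
rewrite p_part pfactor_dvdn //.
have p2 : 2 * p <= n by have := dvdn_leq k0 pk; lia.
have [_ lt] := H p pp p2.
have le : p ^ logn p k <= k by apply: dvdn_leq => //; apply: pfactor_dvdnn.
rewrite /vacute in lt.
have : p ^ logn p k < p ^ (logn p n).+1 by lia.
by rewrite ltn_exp2l ?prime_gt1.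
Qed.
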